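(* Let $\alpha^*=\mathbb{E}_C[\mathrm{wkt}_C(\vec e_{\mathsf o})]/\mathbb{E}_C[\mathrm{wkt}_C(\vec e_{\mathsf a})]$, where the expectation is over an input array $C$ of $N$ integers each drawn uniformly from $\{0,\dots,2^n-1\}$. Then $\alpha^*=\Omega\!\left(\frac{2^{n/2}}{N\log N}\right)$.
   Context: An input is an array $C[1..N]$ of $n$-bit integers, bits indexed $1$ (least significant) to $n$ (most significant); entries are assumed distinct. An energy vector $\vec e=(e_1,\dots,e_n)$ assigns energy $e_j\ge0$ to bit $j$. An inexact comparison of two items $u,v$ with energy vector $\vec e$ reads each bit $j$ of $u$ and of $v$ independently, flipped with probability $2^{-e_j}$, and orders $u,v$ according to the read values (i.e., by the most significant bit at which the read values differ); each comparison uses fresh independent randomness. The array is sorted by randomized quicksort (pivot chosen uniformly at random from the current subarray, each other element placed on a side by an inexact comparison with the pivot, then recursion). For items $u,v$, $Q(u,v,\vec e)$ is the event that in the output of quicksort $u$ and $v$ are in the wrong relative order. The expected weighted Kendall $\tau$ distance is $\mathrm{wkt}_C(\vec e)=\sum_{1\le a<b\le N}|C[a]-C[b]|\cdot\Pr[Q(C[a],C[b],\vec e)]$, the probability being over pivot choices and comparison errors. The inexactness aware vector is $\vec e_{\mathsf a}=(1,2,\dots,n)$ (bit $j$ gets energy $j$) and the oblivious vector is $\vec e_{\mathsf o}=(\frac{n+1}{2},\dots,\frac{n+1}{2})$. *)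

(* Defs.v *)
From Stdlib Require Import Reals Lra Lia Arith List.
Import ListNotations.
Open Scope R_scope.

Definition dist (A : Type) := list (R * A).

Definition dret {A} (x : A) : dist A := [(1, x)].

Definition dbind {A B} (d : dist A) (f : A -> dist B) : dist B :=
  flat_map (fun px => map (fun qy => (fst px * fst qy, snd qy)) (f (snd px))) d.

Definition dprob {A} (d : dist A) (P : A -> bool) : R :=
  fold_right Rplus 0 (map (fun px => if P (snd px) then fst px else 0) d).

(* An energy vector is e : nat -> R, with e j the energy of bit j (j = 1..n,
   bit 1 least significant).  Bit j is flipped with probability 2^(-e j). *)
Definition flip_prob (e : nat -> R) (j : nat) : R := Rpower 2 (- e j).

Definition read_bit (e : nat -> R) (x j : nat) : dist bool :=
  let b := Nat.testbit x (j - 1) in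
  [(1 - flip_prob e j, b); (flip_prob e j, negb b)].

Fixpoint read_low (e : nat -> R) (x k : nat) : dist nat :=
  match k with
  | O => dret 0%nat
  | S k' => dbind (read_low e x k') (fun r =>
            dbind (read_bit e x k) (fun b =>
            dret (r + (if b then 2 ^ k' else 0))%nat))
  end.

Definition read_val (n : nat) (e : nat -> R) (x : nat) : dist nat := read_low e x n.

(* inexact comparison: true iff the read value of u is strictly less than the
   read value of v (each comparison reads both items afresh) *)
Definition inexact_lt (n : nat) (e : nat -> R) (u v : nat) : dist bool :=
  dbind (read_val n e u) (fun ru =>
  dbind (read_val n e v) (fun rv =>
  dret (Nat.ltb ru rv))).

Definition uniform_pos (l : list nat) : dist nat :=
  map (fun i => (/ INR (length l), i)) (seq 0 (length l)).

Fixpoint remove_at {A} (i : nat) (l : list A) : list A :=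
  match l, i with
  | [], _ => []
  | _ :: t, O => t
  | h :: t, S i' => h :: remove_at i' t
  end.

Fixpoint partition_inexact (n : nat) (e : nat -> R) (C : nat -> nat) (pv : nat)
    (l : list nat) : dist (list nat * list nat) :=
  match l with
  | [] => dret ([], [])
  | x :: xs =>
      dbind (inexact_lt n e (C x) pv) (fun b =>
      dbind (partition_inexact n e C pv xs) (fun LR =>
      dret (if b then (x :: fst LR, snd LR) else (fst LR, x :: snd LR))))
  end.

(* fuel is at least the length of the list, so it never runs out *)
Fixpoint quicksort (n : nat) (e : nat -> R) (C : nat -> nat) (fuel : nat)
    (l : list nat) : dist (list nat) :=
  match fuel with
  | O => dret l
  | S f =>
    match l with
    | [] => dret []
    | _ =>
      dbind (uniform_pos l) (fun i =>
      let p := nth i l 0%nat in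
      dbind (partition_inexact n e C (C p) (remove_at i l)) (fun LR =>
      dbind (quicksort n e C f (fst LR)) (fun sL =>
      dbind (quicksort n e C f (snd LR)) (fun sR =>
      dret (sL ++ p :: sR)))))
    end
  end.

Fixpoint before (x y : nat) (s : list nat) : bool :=
  match s with
  | [] => false
  | z :: s' => if Nat.eqb z x then true else if Nat.eqb z y then false
               else before x y s'
  end.

Definition wrong_order (C : nat -> nat) (a b : nat) (s : list nat) : bool :=
  if Nat.ltb (C a) (C b) then before b a s
  else if Nat.ltb (C b) (C a) then before a b s
  else false.

Fixpoint sumR (l : list R) : R := match l with [] => 0 | x :: t => x + sumR t end.

Definition wkt (n N : nat) (C : nat -> nat) (e : nat -> R) : R :=
  let out := quicksort n e C N (seq 0 N) in
  sumR (map (fun b =>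
    sumR (map (fun a =>
      Rabs (INR (C a) - INR (C b)) * dprob out (wrong_order C a b))
      (seq 0 b)))
    (seq 0 N)).

Definition e_aware : nat -> R := fun j => INR j.
Definition e_obliv (n : nat) : nat -> R := fun _ => (INR n + 1) / 2.

Fixpoint all_arrays (N M : nat) : list (list nat) :=
  match N with
  | O => [[]]
  | S N' => flat_map (fun c => map (fun v => v :: c) (seq 0 M)) (all_arrays N' M)
  end.

Definition expected_wkt (n N : nat) (e : nat -> R) : R :=
  sumR (map (fun c => wkt n N (fun i => nth i c 0%nat) e) (all_arrays N (2 ^ n)))
  / (INR (2 ^ n)) ^ N.

Definition alpha_star (n N : nat) : R :=
  expected_wkt n N (e_obliv n) / expected_wkt n N e_aware.

(* Main.v *)
Require Import Defs.
From Stdlib Require Import Reals.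
From Stdlib Require Import Reals Lra Lia Arith List Permutation FunctionalExtensionality.
Import ListNotations.
Open Scope R_scope.

Definition wsum {A} (d : Defs.dist A) (g : A -> R) : R :=
  fold_right Rplus 0 (map (fun px => fst px * g (snd px)) d).
Definition ind (b : bool) : R := if b then 1 else 0.
Definition mass {A} (d : Defs.dist A) : R := wsum d (fun _ => 1).
Definition good {A} (d : Defs.dist A) (P : A -> Prop) : Prop :=
  Forall (fun px => 0 <= fst px /\ P (snd px)) d.

Lemma ind_range b : 0 <= ind b <= 1.
Proof. destruct b; simpl; lra. Qed.

Lemma dprob_wsum {A} (d : Defs.dist A) P : dprob d P = wsum d (fun x => ind (P x)).
Proof. unfold dprob, wsum. induction d as [|[w x] d IH]; simpl; auto. rewrite IH. unfold ind; destruct (P x); ring. Qed.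

Lemma wsum_app {A} (l1 l2 : Defs.dist A) g : wsum (l1 ++ l2) g = wsum l1 g + wsum l2 g.
Proof. induction l1 as [|p l IH]; unfold wsum in *; simpl. ring. rewrite IH; ring. Qed.

Lemma wsum_scale_map {A} (l : Defs.dist A) w g :
  wsum (map (fun qy => (w * fst qy, snd qy)) l) g = w * wsum l g.
Proof. induction l as [|p l IH]; unfold wsum in *; simpl. ring. rewrite IH; ring. Qed.

Lemma wsum_bind {A B} (d : Defs.dist A) (f : A -> Defs.dist B) g :
  wsum (dbind d f) g = wsum d (fun x => wsum (f x) g).
Proof.
  induction d as [|[w x] d IH]; unfold dbind in *; simpl. reflexivity.
  rewrite wsum_app, wsum_scale_map. rewrite IH. unfold wsum at 3; simpl. reflexivity.
Qed.

Lemma wsum_ret {A} (x : A) g : wsum (dret x) g = g x.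
Proof. unfold wsum, dret; simpl; ring. Qed.

Lemma wsum_plus {A} (d : Defs.dist A) g h : wsum d (fun x => g x + h x) = wsum d g + wsum d h.
Proof. induction d as [|p l IH]; unfold wsum in *; simpl. ring. rewrite IH; ring. Qed.

Lemma wsum_scal {A} (d : Defs.dist A) c g : wsum d (fun x => c * g x) = c * wsum d g.
Proof. induction d as [|p l IH]; unfold wsum in *; simpl. ring. rewrite IH; ring. Qed.

Lemma wsum_scar {A} (d : Defs.dist A) c g : wsum d (fun x => g x * c) = wsum d g * c.
Proof. induction d as [|p l IH]; unfold wsum in *; simpl. ring. rewrite IH; ring. Qed.

Lemma wsum_const {A} (d : Defs.dist A) c : wsum d (fun _ => c) = c * mass d.
Proof. unfold mass. rewrite <- wsum_scal. f_equal. apply functional_extensionality; intros; ring. Qed.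

Lemma wsum_le {A} (d : Defs.dist A) P g h : good d P -> (forall x, P x -> g x <= h x) ->
  wsum d g <= wsum d h.
Proof.
  intros Hg H; induction Hg as [|[w x] l [Hw Hp] Hl IH]; unfold wsum in *; simpl. lra.
  simpl in *. specialize (H x Hp). apply Rplus_le_compat; auto. apply Rmult_le_compat_l; auto.
Qed.

Lemma wsum_ext {A} (d : Defs.dist A) P g h : good d P -> (forall x, P x -> g x = h x) ->
  wsum d g = wsum d h.
Proof.
  intros Hg H; induction Hg as [|[w x] l [Hw Hp] Hl IH]; unfold wsum in *; simpl. lra.
  simpl in *. rewrite H by auto. rewrite IH; auto.
Qed.

Lemma wsum_nonneg {A} (d : Defs.dist A) P g : good d P -> (forall x, P x -> 0 <= g x) -> 0 <= wsum d g.
Proof. intros Hg H. replace 0 with (wsum d (fun _ => 0)). eapply wsum_le; eauto.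
  rewrite wsum_const; ring. Qed.

Lemma good_weaken {A} (d : Defs.dist A) (P Q : A -> Prop) : good d P -> (forall x, P x -> Q x) -> good d Q.
Proof. intros H1 H2. eapply Forall_impl; [|exact H1]. intros [w x] [? ?]; split; auto. Qed.

Lemma good_ret {A} (x : A) (P : A -> Prop) : P x -> good (dret x) P.
Proof. intros; constructor; simpl; auto. split; auto; lra. Qed.

Lemma good_bind {A B} (d : Defs.dist A) (f : A -> Defs.dist B) P Q :
  good d P -> (forall x, P x -> good (f x) Q) -> good (dbind d f) Q.
Proof.
  intros Hg H; induction Hg as [|[w x] l [Hw Hp] Hl IH]; unfold dbind in *; simpl. constructor.
  apply Forall_app; split; auto. simpl in *.
  specialize (H x Hp). apply Forall_map. eapply Forall_impl; [|exact H].
  intros [w' y] [? ?]; simpl; split; auto. apply Rmult_le_pos; auto.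
Qed.

Lemma mass_ret {A} (x : A) : mass (dret x) = 1.
Proof. unfold mass; rewrite wsum_ret; auto. Qed.

Lemma mass_bind {A B} (d : Defs.dist A) (f : A -> Defs.dist B) P :
  good d P -> mass d = 1 -> (forall x, P x -> mass (f x) = 1) -> mass (dbind d f) = 1.
Proof.
  intros Hg Hm H. unfold mass at 1. rewrite wsum_bind.
  rewrite (wsum_ext _ _ _ (fun _ => 1) Hg); auto.
Qed.

Definition ok {A} (d : Defs.dist A) (P : A -> Prop) := good d P /\ mass d = 1.

Lemma ok_ret {A} (x : A) (P : A -> Prop) : P x -> ok (dret x) P.
Proof. split; [apply good_ret; auto | apply mass_ret]. Qed.

Lemma ok_bind {A B} (d : Defs.dist A) (f : A -> Defs.dist B) P Q :
  ok d P -> (forall x, P x -> ok (f x) Q) -> ok (dbind d f) Q.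
Proof. intros [H1 H2] H; split. eapply good_bind; eauto. intros; apply H; auto.
  eapply mass_bind; eauto. intros; apply H; auto. Qed.

Lemma wsum_compl {A} (d : Defs.dist A) P g : ok d P ->
  wsum d (fun x => 1 - g x) = 1 - wsum d g.
Proof. intros [H1 H2]. unfold Rminus. rewrite wsum_plus. rewrite wsum_const, H2.
  replace (fun x => - g x) with (fun x => (-1) * g x). rewrite wsum_scal; ring.
  apply functional_extensionality; intros; ring. Qed.

Lemma fp_range e j : 0 <= e j -> 0 < flip_prob e j <= 1.
Proof.
  intros H. unfold flip_prob. split. apply exp_pos.
  rewrite <- (Rpower_O 2) by lra. apply Rle_Rpower; lra.
Qed.

Lemma wsum_read_bit e x j g : wsum (read_bit e x j) g =
  (1 - flip_prob e j) * g (Nat.testbit x (j-1)) + flip_prob e j * g (negb (Nat.testbit x (j-1))).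
Proof. unfold wsum, read_bit; simpl; ring. Qed.

Lemma read_bit_ok e x j : 0 <= e j -> ok (read_bit e x j) (fun _ => True).
Proof. intros H. pose proof (fp_range e j H). split.
  - unfold good, read_bit. constructor; [simpl; split; [lra|auto]|].
    constructor; [simpl; split; [lra|auto]| constructor].
  - unfold mass. rewrite wsum_read_bit. ring.
Qed.

Definition B (k : nat) (b : bool) : nat := if b then 2^k else 0.

Lemma read_low_unfold e x k : read_low e x (S k) =
  dbind (read_low e x k) (fun r => dbind (read_bit e x (S k)) (fun b => dret (r + B k b)%nat)).
Proof. reflexivity. Qed.

Lemma read_low_ok e x k : (forall j, 0 <= e j) -> ok (read_low e x k) (fun r => (r < 2^k)%nat).
Proof.
  intros He. induction k as [|k IH].
  - apply ok_ret. simpl; lia.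
  - rewrite read_low_unfold. eapply ok_bind. exact IH. intros r Hr. eapply ok_bind. apply read_bit_ok; auto.
    intros b _. apply ok_ret. cbv beta in *. unfold B. simpl. destruct b; lia.
Qed.

Lemma inexact_lt_ok n e u v : (forall j, 0 <= e j) -> ok (inexact_lt n e u v) (fun _ => True).
Proof.
  intros He. unfold inexact_lt, read_val. eapply ok_bind. apply read_low_ok; auto.
  intros. eapply ok_bind. apply read_low_ok; auto. intros. apply ok_ret; auto.
Qed.



Lemma mod_succ x k : (x mod 2^(S k) = x mod 2^k + B k (Nat.testbit x k))%nat.
Proof.
  replace (2^(S k))%nat with (2^k * 2)%nat by (simpl; lia).
  rewrite Nat.Div0.mod_mul_r. rewrite <- Nat.testbit_spec'. unfold B.
  destruct (Nat.testbit x k); simpl; lia.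
Qed.

Lemma pow2_pos k : (0 < 2^k)%nat.
Proof. apply Nat.neq_0_lt_0. apply Nat.pow_nonzero. lia. Qed.

Lemma divA r x k t : (r < 2^k)%nat -> (r / 2^t = (x mod 2^k) / 2^t)%nat ->
  ((r + B k (Nat.testbit x k)) / 2^t = (x mod 2^(S k)) / 2^t)%nat.
Proof.
  intros Hr H. rewrite mod_succ.
  destruct (le_lt_dec t k) as [Htk|Htk].
  - assert (E : forall b, B k b = ((if b then 2^(k-t) else 0) * 2^t)%nat).
    { intros b; unfold B; destruct b; [|lia]. rewrite <- Nat.pow_add_r. f_equal; lia. }
    rewrite !E. rewrite !Nat.div_add by (apply Nat.pow_nonzero; lia). lia.
  - assert (Hx : (x mod 2^k < 2^k)%nat) by (apply Nat.mod_upper_bound; apply Nat.pow_nonzero; lia).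
    assert (2^(S k) <= 2^t)%nat by (apply Nat.pow_le_mono_r; lia).
    simpl in H0. unfold B. rewrite !Nat.div_small; auto; destruct (Nat.testbit x k); lia.
Qed.

Lemma divB r x k t b : (k < t)%nat -> (r < 2^k)%nat ->
  ((r + B k b) / 2^t = (x mod 2^(S k)) / 2^t)%nat.
Proof.
  intros Htk Hr. rewrite mod_succ.
  assert (Hx : (x mod 2^k < 2^k)%nat) by (apply Nat.mod_upper_bound; apply Nat.pow_nonzero; lia).
  assert (2^(S k) <= 2^t)%nat by (apply Nat.pow_le_mono_r; lia).
  simpl in H. unfold B. rewrite !Nat.div_small; auto; destruct b; try destruct (Nat.testbit x k); lia.
Qed.

Fixpoint sumfp (e : nat -> R) (t k : nat) : R :=
  match k with
  | O => 0
  | S k' => sumfp e t k' + (if (t <=? k')%nat then flip_prob e (S k') else 0)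
  end.

Lemma sumfp_nonneg e t k : (forall j, 0 <= e j) -> 0 <= sumfp e t k.
Proof. intros He; induction k; simpl. lra. destruct (t <=? k)%nat; try lra.
  pose proof (fp_range e (S k) (He _)); lra. Qed.



Lemma read_err e (He : forall j, 0 <= e j) : forall k x t,
  wsum (read_low e x k) (fun r => ind (negb (Nat.eqb (r / 2^t) ((x mod 2^k) / 2^t))))
  <= sumfp e t k.
Proof.
  induction k as [|k IH]; intros x t.
  - simpl. rewrite wsum_ret. simpl. replace (x mod 1)%nat with 0%nat by (symmetry; apply Nat.mod_1_r). rewrite Nat.eqb_refl. simpl. lra.
  - rewrite read_low_unfold, wsum_bind.
    destruct (read_low_ok e x k He) as [Hg Hm].
    set (c := if (t <=? k)%nat then flip_prob e (S k) else 0).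
    apply Rle_trans with (wsum (read_low e x k)
        (fun r => ind (negb (Nat.eqb (r / 2^t) ((x mod 2^k) / 2^t))) + c)).
    + eapply wsum_le. exact Hg. intros r Hr. cbv beta in *.
      rewrite wsum_bind. rewrite wsum_read_bit. rewrite !wsum_ret.
      replace (S k - 1)%nat with k by lia.
      pose proof (fp_range e (S k) (He _)) as Hf.
      destruct (Nat.eqb_spec (r / 2^t) ((x mod 2^k) / 2^t)) as [Heq|Hne].
      * rewrite (divA r x k t Hr Heq). rewrite Nat.eqb_refl. simpl.
        unfold c. destruct (Nat.leb_spec t k).
        -- match goal with |- context [ind ?b] => pose proof (ind_range b) end. nra.
        -- rewrite (divB r x k t) by (auto; lia). rewrite Nat.eqb_refl. simpl. lra.
      * simpl. unfold c. 
        assert (0 <= (if (t <=? k)%nat then flip_prob e (S k) else 0)) by (destruct (t <=? k)%nat; lra).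
        repeat match goal with |- context [ind ?b] => 
          let h := fresh in pose proof (ind_range b) as h; revert h; generalize (ind b) end.
        intros; nra.
    + rewrite wsum_plus, wsum_const, Hm. simpl. specialize (IH x t). fold c. lra.
Qed.

Fixpoint prodag (e : nat -> R) (x y k : nat) : R :=
  match k with
  | O => 1
  | S k' => prodag e x y k' *
      (if Bool.eqb (Nat.testbit x k') (Nat.testbit y k') then 1 - flip_prob e (S k') else flip_prob e (S k'))
  end.

Lemma prodag_nonneg e x y k : (forall j, 0 <= e j) -> 0 <= prodag e x y k.
Proof. intros He; induction k; simpl. lra. apply Rmult_le_pos; auto.
  pose proof (fp_range e (S k) (He _)). destruct Bool.eqb; lra. Qed.

Lemma prodag_mod e x y k m : (k <= m)%nat -> prodag e x (y mod 2^m) k = prodag e x y k.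
Proof. induction k; intros H; simpl. auto. rewrite IHk by lia.
  rewrite Nat.mod_pow2_bits_low by lia. auto. Qed.

Lemma read_eq_lb e (He : forall j, 0 <= e j) : forall k x y, (y < 2^k)%nat ->
  prodag e x y k <= wsum (read_low e x k) (fun r => ind (Nat.eqb r y)).
Proof.
  induction k as [|k IH]; intros x y Hy.
  - simpl in Hy. assert (y = 0%nat) by lia. subst. simpl. rewrite wsum_ret. simpl. lra.
  - rewrite read_low_unfold, wsum_bind.
    destruct (read_low_ok e x k He) as [Hg Hm].
    set (c := if Bool.eqb (Nat.testbit x k) (Nat.testbit y k) then 1 - flip_prob e (S k) else flip_prob e (S k)).
    pose proof (fp_range e (S k) (He _)) as Hf.
    assert (Hc : 0 <= c) by (unfold c; destruct Bool.eqb; lra).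
    apply Rle_trans with (wsum (read_low e x k) (fun r => ind (Nat.eqb r (y mod 2^k)) * c)).
    + rewrite wsum_scar. simpl. fold c. apply Rmult_le_compat_r; auto.
      rewrite <- (prodag_mod e x y k k) by lia. apply IH.
      apply Nat.mod_upper_bound. apply Nat.pow_nonzero; lia.
    + eapply wsum_le. exact Hg. intros r Hr. cbv beta in *.
      rewrite wsum_bind, wsum_read_bit, !wsum_ret. replace (S k - 1)%nat with k by lia.
      assert (Hy' : y = (y mod 2^k + B k (Nat.testbit y k))%nat).
      { rewrite <- mod_succ. rewrite Nat.mod_small; auto. }
      destruct (Nat.eqb_spec r (y mod 2^k)) as [E|E].
      * subst r. unfold c.
        destruct (Bool.bool_dec (Nat.testbit x k) (Nat.testbit y k)) as [Eb|Eb].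
        -- rewrite Eb, Bool.eqb_reflx. rewrite <- Hy', Nat.eqb_refl. cbn [ind].
           repeat match goal with |- context [ind ?b] => 
             let h := fresh in pose proof (ind_range b) as h; revert h; generalize (ind b) end;
           intros; nra.
        -- assert (Eb' : negb (Nat.testbit x k) = Nat.testbit y k) by (destruct (Nat.testbit x k), (Nat.testbit y k); simpl; congruence).
           rewrite Eb'. rewrite <- Hy', Nat.eqb_refl. 
           replace (Bool.eqb (Nat.testbit x k) (Nat.testbit y k)) with false
             by (destruct (Nat.testbit x k), (Nat.testbit y k); simpl; congruence).
           cbn [ind].
           repeat match goal with |- context [ind ?b] => 
             let h := fresh in pose proof (ind_range b) as h; revert h; generalize (ind b) end;
           intros; nra.
      * simpl. rewrite Rmult_0_l.
        repeat match goal with |- context [ind ?b] => 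
          let h := fresh in pose proof (ind_range b) as h; revert h; generalize (ind b) end;
        intros; nra.
Qed.

Lemma lt_lb n e (He : forall j, 0 <= e j) x y x' y' : (x' < 2^n)%nat -> (y' < 2^n)%nat ->
  prodag e x x' n * prodag e y y' n <=
  wsum (inexact_lt n e x y) (fun b => ind (Bool.eqb b (Nat.ltb x' y'))).
Proof.
  intros Hx Hy. unfold inexact_lt, read_val. rewrite wsum_bind.
  destruct (read_low_ok e x n He) as [Hg Hm].
  destruct (read_low_ok e y n He) as [Hg' Hm'].
  apply Rle_trans with (wsum (read_low e x n) (fun r => ind (Nat.eqb r x') * prodag e y y' n)).
  - rewrite wsum_scar. apply Rmult_le_compat_r. apply prodag_nonneg; auto. apply read_eq_lb; auto.
  - eapply wsum_le. exact Hg. intros r _. rewrite wsum_bind.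
    destruct (Nat.eqb_spec r x').
    + subst. simpl. rewrite Rmult_1_l. eapply Rle_trans. apply read_eq_lb; eauto.
      eapply wsum_le. exact Hg'. intros s _. rewrite wsum_ret.
      destruct (Nat.eqb_spec s y'). subst. rewrite Bool.eqb_reflx. simpl; lra.
      simpl. destruct Bool.eqb; simpl; lra.
    + simpl. rewrite Rmult_0_l. eapply wsum_nonneg. exact Hg'. intros. rewrite wsum_ret.
      destruct Bool.eqb; simpl; lra.
Qed.

Lemma div_lt_imp a b t : (a / 2^t < b / 2^t)%nat -> (a < b)%nat.
Proof. intros H. destruct (le_lt_dec b a); auto. 
  assert (b / 2^t <= a / 2^t)%nat by (apply Nat.Div0.div_le_mono; auto). lia. Qed.

Lemma lt_err n e (He : forall j, 0 <= e j) x y t : (x < 2^n)%nat -> (y < 2^n)%nat ->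
  (x / 2^t <> y / 2^t)%nat ->
  wsum (inexact_lt n e x y) (fun b => ind (negb (Bool.eqb b (Nat.ltb x y)))) <= 2 * sumfp e t n.
Proof.
  intros Hx Hy Hne. unfold inexact_lt, read_val. rewrite wsum_bind.
  destruct (read_low_ok e x n He) as [Hg Hm].
  destruct (read_low_ok e y n He) as [Hg' Hm'].
  pose proof (read_err e He n x t) as E1. pose proof (read_err e He n y t) as E2.
  rewrite Nat.mod_small in E1, E2 by auto.
  apply Rle_trans with (wsum (read_low e x n) (fun r => ind (negb (Nat.eqb (r / 2^t) (x / 2^t)))
     + wsum (read_low e y n) (fun s => ind (negb (Nat.eqb (s / 2^t) (y / 2^t)))))).
  - eapply wsum_le. exact Hg. intros r _. rewrite wsum_bind.
    apply Rle_trans with (wsum (read_low e y n) (fun s => ind (negb (Nat.eqb (r / 2^t) (x / 2^t))) +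
         ind (negb (Nat.eqb (s / 2^t) (y / 2^t))))).
    + eapply wsum_le. exact Hg'. intros s _. rewrite wsum_ret.
      destruct (Nat.eqb_spec (r / 2^t) (x / 2^t)) as [E|E];
      destruct (Nat.eqb_spec (s / 2^t) (y / 2^t)) as [E'|E']; simpl;
      try (destruct (Bool.eqb _ _); simpl; lra).
      assert (Hxy: (Nat.ltb r s) = (Nat.ltb x y)).
      { destruct (lt_eq_lt_dec (x / 2^t) (y / 2^t)) as [[L|L]|L]; [|lia|].
        - rewrite (proj2 (Nat.ltb_lt r s)), (proj2 (Nat.ltb_lt x y)); auto;
          eapply div_lt_imp; rewrite ?E, ?E'; eauto.
        - rewrite (proj2 (Nat.ltb_ge r s)), (proj2 (Nat.ltb_ge x y)); auto;
          apply Nat.lt_le_incl; eapply div_lt_imp; rewrite ?E, ?E'; eauto. }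
      rewrite Hxy, Bool.eqb_reflx. simpl. lra.
    + rewrite wsum_plus, wsum_const, Hm'. lra.
  - rewrite wsum_plus, wsum_const, Hm. lra.
Qed.

Definition memb (x : nat) (l : list nat) : bool := existsb (Nat.eqb x) l.

Lemma memb_In x l : memb x l = true <-> In x l.
Proof. unfold memb. rewrite existsb_exists. split.
  - intros [y [H1 H2]]. apply Nat.eqb_eq in H2. subst; auto.
  - intros H. exists x; split; auto. apply Nat.eqb_refl. Qed.

Lemma memb_false x l : ~ In x l -> memb x l = false.
Proof. intros H. destruct (memb x l) eqn:E; auto. apply memb_In in E. tauto. Qed.

Lemma memb_cons x z l : memb x (z :: l) = (Nat.eqb x z || memb x l)%bool.
Proof. reflexivity. Qed.

Lemma part_unfold n e C pv x xs : partition_inexact n e C pv (x :: xs) =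
  dbind (inexact_lt n e (C x) pv) (fun b =>
  dbind (partition_inexact n e C pv xs) (fun LR =>
  dret (if b then (x :: fst LR, snd LR) else (fst LR, x :: snd LR)))).
Proof. reflexivity. Qed.

Lemma part_ok n e C pv l : (forall j, 0 <= e j) ->
  ok (partition_inexact n e C pv l) (fun LR => Permutation (fst LR ++ snd LR) l).
Proof.
  intros He. induction l as [|x xs IH].
  - apply ok_ret. simpl. constructor.
  - rewrite part_unfold. eapply ok_bind. apply inexact_lt_ok; auto. intros b _.
    eapply ok_bind. exact IH. intros [L R] HP. apply ok_ret. simpl in *.
    destruct b; simpl.
    + constructor; auto.
    + eapply Permutation_trans. apply Permutation_sym, Permutation_middle. constructor; auto.
Qed.

Definition plt n e (C : nat -> nat) x pv := wsum (inexact_lt n e (C x) pv) (fun b => ind b).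

Lemma part_marg n e C pv (He : forall j, 0 <= e j) : forall l x, NoDup l -> In x l ->
  wsum (partition_inexact n e C pv l) (fun LR => ind (memb x (fst LR))) = plt n e C x pv.
Proof.
  induction l as [|z zs IH]; intros x Hnd Hin. destruct Hin.
  inversion Hnd as [|? ? Hz Hnd']; subst.
  destruct (part_ok n e C pv zs He) as [Hg Hm].
  destruct (inexact_lt_ok n (e) (C z) pv He) as [Hg1 Hm1].
  rewrite part_unfold, wsum_bind.
  destruct (Nat.eq_dec x z) as [->|Hxz].
  - unfold plt. eapply wsum_ext. exact Hg1. intros b _. rewrite wsum_bind.
    rewrite (wsum_ext _ _ _ (fun _ => ind b) Hg). rewrite wsum_const, Hm; ring.
    intros [L R] HP. rewrite wsum_ret. simpl in HP.
    assert (~ In z L) by (intro; apply Hz; eapply Permutation_in; [exact HP|]; apply in_or_app; auto).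
    destruct b; simpl. rewrite Nat.eqb_refl. auto. rewrite memb_false; auto.
  - destruct Hin as [Hin|Hin]; [congruence|].
    rewrite (wsum_ext _ _ _ (fun _ => plt n e C x pv) Hg1). rewrite wsum_const, Hm1; ring.
    intros b _. rewrite wsum_bind. rewrite <- (IH x Hnd' Hin). eapply wsum_ext. exact Hg.
    intros [L R] _. rewrite wsum_ret. destruct b; simpl; auto.
    rewrite (proj2 (Nat.eqb_neq x z) Hxz). auto.
Qed.

Lemma ind_and a b : ind (a && b) = ind a * ind b.
Proof. destruct a, b; simpl; ring. Qed.
Lemma ind_negb a : ind (negb a) = 1 - ind a.
Proof. destruct a; simpl; ring. Qed.

Lemma part_joint n e C pv (He : forall j, 0 <= e j) : forall l x y, NoDup l -> In x l -> In y l -> x <> y ->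
  wsum (partition_inexact n e C pv l) (fun LR => ind (memb x (fst LR) && negb (memb y (fst LR))))
  = plt n e C x pv * (1 - plt n e C y pv).
Proof.
  induction l as [|z zs IH]; intros x y Hnd Hx Hy Hxy. destruct Hx.
  inversion Hnd as [|? ? Hz Hnd']; subst.
  destruct (part_ok n e C pv zs He) as [Hg Hm].
  destruct (inexact_lt_ok n (e) (C z) pv He) as [Hg1 Hm1].
  rewrite part_unfold, wsum_bind.
  assert (HnL : forall L R, Permutation (L ++ R) zs -> ~ In z L).
  { intros L R HP ?. apply Hz; eapply Permutation_in; [exact HP|]; apply in_or_app; auto. }
  destruct (Nat.eq_dec x z) as [->|Hxz]; [|destruct (Nat.eq_dec y z) as [->|Hyz]].
  - destruct Hy as [Hy|Hy]; [congruence|].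
    unfold plt. rewrite <- wsum_scar. eapply wsum_ext. exact Hg1. intros b _. rewrite wsum_bind.
    rewrite (wsum_ext _ _ _ (fun LR => ind b * (1 - ind (memb y (fst LR)))) Hg).
    rewrite wsum_scal, (wsum_compl _ (fun LR => Permutation (fst LR ++ snd LR) zs)). 2: split; eauto.
    fold (plt n e C y pv). rewrite (part_marg n e C pv He zs y Hnd' Hy). ring.
    intros [L R] HP. rewrite wsum_ret. simpl in HP. pose proof (HnL L R HP).
    rewrite ind_and, ind_negb. destruct b; simpl.
    + rewrite Nat.eqb_refl. rewrite (proj2 (Nat.eqb_neq y z)) by auto. simpl. auto.
    + rewrite (memb_false z L) by auto. simpl. ring.
  - destruct Hx as [Hx|Hx]; [congruence|].
    unfold plt at 2. rewrite <- wsum_compl with (P := fun _ => True) by (split; auto).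
    rewrite <- wsum_scal. eapply wsum_ext. exact Hg1. intros b _. rewrite wsum_bind.
    rewrite (wsum_ext _ _ _ (fun LR => ind (memb x (fst LR)) * (1 - ind b)) Hg).
    rewrite wsum_scar. rewrite (part_marg n e C pv He zs x Hnd' Hx). ring.
    intros [L R] HP. rewrite wsum_ret. simpl in HP. pose proof (HnL L R HP).
    rewrite ind_and, ind_negb. destruct b; simpl.
    + rewrite Nat.eqb_refl. rewrite (proj2 (Nat.eqb_neq x z)) by auto. simpl. auto.
    + rewrite (memb_false z L) by auto. simpl. ring.
  - destruct Hx as [Hx|Hx]; [congruence|]. destruct Hy as [Hy|Hy]; [congruence|].
    rewrite (wsum_ext _ _ _ (fun _ => plt n e C x pv * (1 - plt n e C y pv)) Hg1).
    rewrite wsum_const, Hm1; ring.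
    intros b _. rewrite wsum_bind. rewrite <- (IH x y Hnd' Hx Hy Hxy). eapply wsum_ext. exact Hg.
    intros [L R] _. rewrite wsum_ret. destruct b; simpl; auto.
    rewrite (proj2 (Nat.eqb_neq x z) Hxz), (proj2 (Nat.eqb_neq y z) Hyz). auto.
Qed.

Lemma wsum_map_const (s : list nat) c g : wsum (map (fun i => (c, i)) s) g = c * sumR (map g s).
Proof. induction s; unfold wsum in *; simpl. ring. rewrite IHs. ring. Qed.

Lemma sumR_const {A} (s : list A) c : sumR (map (fun _ => c) s) = c * INR (length s).
Proof. induction s; simpl. ring. rewrite IHs. destruct (length s); simpl; ring. Qed.

Lemma wsum_uniform l g : wsum (uniform_pos l) g = / INR (length l) * sumR (map g (seq 0 (length l))).
Proof. unfold uniform_pos. apply wsum_map_const. Qed.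

Lemma uniform_ok l : l <> [] -> ok (uniform_pos l) (fun i => (i < length l)%nat).
Proof.
  intros Hl. assert (Hlen : (0 < length l)%nat) by (destruct l; simpl; [congruence|lia]).
  split.
  - unfold good, uniform_pos. apply Forall_map. apply Forall_forall. intros i Hi.
    apply in_seq in Hi. simpl. split; [|lia]. left. apply Rinv_0_lt_compat. apply lt_0_INR; lia.
  - unfold mass. rewrite wsum_uniform, sumR_const, length_seq. field. apply not_0_INR; lia.
Qed.

Lemma remove_at_perm : forall (l : list nat) i, (i < length l)%nat ->
  Permutation l (nth i l 0%nat :: remove_at i l).
Proof.
  induction l as [|h t IH]; intros i Hi; simpl in Hi. lia.
  destruct i; simpl. apply Permutation_refl.
  eapply Permutation_trans. apply perm_skip. apply (IH i); lia. apply perm_swap.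
Qed.

Lemma qs_unfold n e C f l : l <> [] -> quicksort n e C (S f) l =
  dbind (uniform_pos l) (fun i =>
      dbind (partition_inexact n e C (C (nth i l 0%nat)) (remove_at i l)) (fun LR =>
      dbind (quicksort n e C f (fst LR)) (fun sL =>
      dbind (quicksort n e C f (snd LR)) (fun sR =>
      dret (sL ++ nth i l 0%nat :: sR))))).
Proof. destruct l; [congruence|reflexivity]. Qed.

Lemma qs_ok n e C (He : forall j, 0 <= e j) : forall f l,
  ok (quicksort n e C f l) (fun s => Permutation s l).
Proof.
  induction f as [|f IH]; intros l.
  - apply ok_ret. apply Permutation_refl.
  - destruct l as [|h t]. apply ok_ret. constructor.
    rewrite qs_unfold by congruence.
    eapply ok_bind. apply uniform_ok; congruence. intros i Hi.
    eapply ok_bind. apply part_ok; auto. intros [L R] HP.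
    eapply ok_bind. apply IH. intros sL HL.
    eapply ok_bind. apply IH. intros sR HR. apply ok_ret. simpl in *.
    eapply Permutation_trans. apply Permutation_sym, Permutation_middle.
    eapply Permutation_trans; [|apply Permutation_sym, remove_at_perm; auto].
    constructor. eapply Permutation_trans; [|exact HP]. apply Permutation_app; auto. simpl; lia.
Qed.

Lemma before_app_in y x s1 s2 : In y s1 \/ In x s1 -> before y x (s1 ++ s2) = before y x s1.
Proof.
  induction s1 as [|z s IH]; intros H; simpl in *. destruct H as [[]|[]].
  destruct (Nat.eqb_spec z y); auto. destruct (Nat.eqb_spec z x); auto.
  apply IH. destruct H as [[H|H]|[H|H]]; try congruence; auto.
Qed.

Lemma before_app_notin y x s1 s2 : ~ In y s1 -> ~ In x s1 -> before y x (s1 ++ s2) = before y x s2.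
Proof.
  induction s1 as [|z s IH]; intros H1 H2; simpl in *; auto.
  destruct (Nat.eqb_spec z y). exfalso; apply H1; auto.
  destruct (Nat.eqb_spec z x). exfalso; apply H2; auto. apply IH; tauto.
Qed.

Lemma before_true y x s : In y s -> ~ In x s -> before y x s = true.
Proof.
  induction s as [|z s IH]; intros H1 H2; simpl in *. destruct H1.
  destruct (Nat.eqb_spec z y); auto. destruct (Nat.eqb_spec z x). exfalso; apply H2; auto.
  apply IH; [destruct H1; [congruence|auto]|tauto].
Qed.

Lemma before_false y x s : In x s -> ~ In y s -> before y x s = false.
Proof.
  induction s as [|z s IH]; intros H1 H2; simpl in *. destruct H1.
  destruct (Nat.eqb_spec z y). exfalso; apply H2; auto. destruct (Nat.eqb_spec z x); auto.
  apply IH; [destruct H1; [congruence|auto]|tauto].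
Qed.

Definition inner n e C f L R (p a b : nat) :=
  wsum (quicksort n e C f L) (fun sL => wsum (quicksort n e C f R)
     (fun sR => ind (before b a (sL ++ p :: sR)))).

Lemma wsum_le1 {A} (d : Defs.dist A) P g : ok d P -> (forall x, P x -> g x <= 1) -> wsum d g <= 1.
Proof. intros [H1 H2] H. rewrite <- H2. unfold mass. eapply wsum_le; eauto. Qed.

Lemma perm_in_iff (s l : list nat) x : Permutation s l -> (In x s <-> In x l).
Proof. intros H; split; intros; [eapply Permutation_in; eauto|eapply Permutation_in; [apply Permutation_sym|]; eauto]. Qed.


Lemma inner_range n e C (He : forall j, 0 <= e j) f L R p a b : 0 <= inner n e C f L R p a b <= 1.
Proof.
  unfold inner. split.
  - eapply wsum_nonneg. apply (qs_ok n e C He f L). intros. eapply wsum_nonneg.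
    apply (qs_ok n e C He f R). intros. apply ind_range.
  - eapply wsum_le1. apply (qs_ok n e C He f L). intros. eapply wsum_le1.
    apply (qs_ok n e C He f R). intros. apply ind_range.
Qed.

Lemma inner_const n e C (He : forall j, 0 <= e j) f L R p a b c :
  (forall sL sR, Permutation sL L -> Permutation sR R -> before b a (sL ++ p :: sR) = c) ->
  inner n e C f L R p a b = ind c.
Proof.
  intros H. unfold inner. destruct (qs_ok n e C He f L) as [G1 M1]. destruct (qs_ok n e C He f R) as [G2 M2].
  rewrite (wsum_ext _ _ _ (fun _ => ind c) G1). rewrite wsum_const, M1; ring.
  intros sL HL. rewrite (wsum_ext _ _ _ (fun _ => ind c) G2). rewrite wsum_const, M2; ring.
  intros sR HR. rewrite H; auto.
Qed.

Lemma inner_1 n e C (He : forall j, 0 <= e j) f L R p a b : In b L -> ~ In a L -> inner n e C f L R p a b = 1.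
Proof. intros. apply (inner_const n e C He f L R p a b true). intros sL sR HL HR.
  rewrite before_app_in. apply before_true. rewrite (perm_in_iff _ _ _ HL); auto.
  rewrite (perm_in_iff _ _ _ HL); auto. left. rewrite (perm_in_iff _ _ _ HL); auto. Qed.

Lemma inner_0 n e C (He : forall j, 0 <= e j) f L R p a b : In a L -> ~ In b L -> inner n e C f L R p a b = 0.
Proof. intros. apply (inner_const n e C He f L R p a b false). intros sL sR HL HR.
  rewrite before_app_in. apply before_false. rewrite (perm_in_iff _ _ _ HL); auto.
  rewrite (perm_in_iff _ _ _ HL); auto. right. rewrite (perm_in_iff _ _ _ HL); auto. Qed.

Lemma inner_pa n e C (He : forall j, 0 <= e j) f L R a b : a <> b -> ~ In a L -> ~ In b L -> inner n e C f L R a a b = 0.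
Proof. intros. apply (inner_const n e C He f L R a a b false). intros sL sR HL HR.
  rewrite before_app_notin. simpl. rewrite (proj2 (Nat.eqb_neq a b)), Nat.eqb_refl; auto.
  rewrite (perm_in_iff _ _ _ HL); auto. rewrite (perm_in_iff _ _ _ HL); auto. Qed.

Lemma inner_pb n e C (He : forall j, 0 <= e j) f L R a b : ~ In a L -> ~ In b L -> inner n e C f L R b a b = 1.
Proof. intros. apply (inner_const n e C He f L R b a b true). intros sL sR HL HR.
  rewrite before_app_notin. simpl. rewrite Nat.eqb_refl; auto.
  rewrite (perm_in_iff _ _ _ HL); auto. rewrite (perm_in_iff _ _ _ HL); auto. Qed.

Lemma inner_L n e C (He : forall j, 0 <= e j) f L R p a b : In a L -> In b L ->
  inner n e C f L R p a b = wsum (quicksort n e C f L) (fun sL => ind (before b a sL)).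
Proof.
  intros. unfold inner. destruct (qs_ok n e C He f L) as [G1 M1]. destruct (qs_ok n e C He f R) as [G2 M2].
  eapply wsum_ext. exact G1. intros sL HL.
  rewrite (wsum_ext _ _ _ (fun _ => ind (before b a sL)) G2). rewrite wsum_const, M2; ring.
  intros sR _. rewrite before_app_in; auto. left. rewrite (perm_in_iff _ _ _ HL); auto.
Qed.

Lemma inner_R n e C (He : forall j, 0 <= e j) f L R p a b : ~ In a L -> ~ In b L -> p <> a -> p <> b ->
  inner n e C f L R p a b = wsum (quicksort n e C f R) (fun sR => ind (before b a sR)).
Proof.
  intros. unfold inner. destruct (qs_ok n e C He f L) as [G1 M1]. destruct (qs_ok n e C He f R) as [G2 M2].
  rewrite (wsum_ext _ _ _ (fun _ => wsum (quicksort n e C f R) (fun sR => ind (before b a sR))) G1).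
  rewrite wsum_const, M1; ring.
  intros sL HL. eapply wsum_ext. exact G2. intros sR _.
  rewrite before_app_notin. simpl. rewrite (proj2 (Nat.eqb_neq p b)), (proj2 (Nat.eqb_neq p a)); auto.
  rewrite (perm_in_iff _ _ _ HL); auto. rewrite (perm_in_iff _ _ _ HL); auto.
Qed.

Lemma qs_step n e C f l a b : l <> [] ->
  wsum (quicksort n e C (S f) l) (fun s => ind (before b a s)) =
  wsum (uniform_pos l) (fun i =>
    wsum (partition_inexact n e C (C (nth i l 0%nat)) (remove_at i l))
      (fun LR => inner n e C f (fst LR) (snd LR) (nth i l 0%nat) a b)).
Proof.
  intros Hl. rewrite qs_unfold by auto. rewrite wsum_bind. f_equal. apply functional_extensionality; intros i.
  rewrite wsum_bind. f_equal. apply functional_extensionality; intros LR. unfold inner.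
  rewrite wsum_bind. f_equal. apply functional_extensionality; intros sL.
  rewrite wsum_bind. f_equal. apply functional_extensionality; intros sR. rewrite wsum_ret. auto.
Qed.

Lemma He_aw : forall j, 0 <= e_aware j.
Proof. intros; unfold e_aware; apply pos_INR. Qed.

Lemma fp_aw j : flip_prob e_aware j = / 2^j.
Proof. unfold flip_prob, e_aware. rewrite Rpower_Ropp, Rpower_pow; lra. Qed.

Lemma aw_sumfp_aux t k : sumfp e_aware t k + / 2^(Nat.max t k) <= / 2^t.
Proof.
  induction k as [|k IH]; simpl.
  - rewrite Nat.max_0_r. lra.
  - destruct (Nat.leb_spec t k).
    + rewrite Nat.max_r in IH by lia. rewrite Nat.max_r by lia. rewrite fp_aw. simpl.
      assert (0 < 2^k) by (apply pow_lt; lra).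
      replace (/ (2 * 2^k)) with (/2 * / 2^k) by (field; lra). lra.
    + rewrite Nat.max_l in IH by lia. rewrite Nat.max_l by lia. lra.
Qed.

Lemma aw_sumfp t k : sumfp e_aware t k <= / 2^t.
Proof. pose proof (aw_sumfp_aux t k). assert (0 < / 2^(Nat.max t k)) by (apply Rinv_0_lt_compat, pow_lt; lra). lra. Qed.

Lemma aw_err_core n x y : (x < 2^n)%nat -> (y < 2^n)%nat -> x <> y ->
  wsum (inexact_lt n e_aware x y) (fun b => ind (negb (Bool.eqb b (Nat.ltb x y))))
  <= 4 / INR (if (x <? y)%nat then y - x else x - y).
Proof.
  intros Hx Hy Hxy. set (d := (if (x <? y)%nat then y - x else x - y)%nat).
  assert (Hd : (0 < d)%nat) by (unfold d; destruct (Nat.ltb_spec x y); lia).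
  set (t := Nat.log2 d). destruct (Nat.log2_spec d Hd) as [H1 H2]. fold t in H1, H2.
  assert (Hne : (x / 2^t <> y / 2^t)%nat).
  { assert (E : forall u w, (u + 2^t <= w)%nat -> (u / 2^t < w / 2^t)%nat).
    { intros u w Huw. apply Nat.lt_le_trans with ((u + 1 * 2^t) / 2^t)%nat.
      rewrite Nat.div_add by (apply Nat.pow_nonzero; lia). lia.
      apply Nat.Div0.div_le_mono. lia. }
    unfold d in *. destruct (Nat.ltb_spec x y).
    - specialize (E x y ltac:(lia)). lia.
    - specialize (E y x ltac:(lia)). lia. }
  eapply Rle_trans. apply (lt_err n e_aware He_aw x y t Hx Hy Hne).
  eapply Rle_trans. apply Rmult_le_compat_l. lra. apply aw_sumfp.
  assert (HD : INR d < 2 * 2^t).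
  { replace (2 * 2^t) with (INR (2^(S t))). apply lt_INR; auto. rewrite pow_INR. replace (INR 2) with 2 by (simpl; lra). simpl. ring. }
  assert (HD0 : 0 < INR d) by (apply lt_0_INR; auto).
  assert (0 < 2^t) by (apply pow_lt; lra).
  apply Rmult_le_reg_r with (INR d * 2^t). nra.
  replace (2 * / 2 ^ t * (INR d * 2 ^ t)) with (2 * INR d) by (field; lra).
  replace (4 / INR d * (INR d * 2 ^ t)) with (4 * 2^t) by (field; lra). lra.
Qed.

Lemma aw_err_lt n u w : (u < w)%nat -> (w < 2^n)%nat ->
  1 - plt n e_aware (fun x => x) u w <= 4 / INR (w - u).
Proof.
  intros. unfold plt. rewrite <- wsum_compl with (P := fun _ => True) by (apply inexact_lt_ok, He_aw).
  pose proof (aw_err_core n u w ltac:(lia) ltac:(lia) ltac:(lia)) as H1.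
  rewrite (proj2 (Nat.ltb_lt u w)) in H1 by auto.
  eapply Rle_trans; [|exact H1]. right. f_equal. apply functional_extensionality; intros b.
  destruct b; simpl; ring.
Qed.

Lemma aw_err_gt n v w : (w < v)%nat -> (v < 2^n)%nat ->
  plt n e_aware (fun x => x) v w <= 4 / INR (v - w).
Proof.
  intros. unfold plt.
  pose proof (aw_err_core n v w ltac:(lia) ltac:(lia) ltac:(lia)) as H1.
  rewrite (proj2 (Nat.ltb_ge v w)) in H1 by lia.
  eapply Rle_trans; [|exact H1]. right. f_equal. apply functional_extensionality; intros b.
  destruct b; simpl; ring.
Qed.

Lemma plt_range n e C (He : forall j, 0 <= e j) x pv : 0 <= plt n e C x pv <= 1.
Proof. unfold plt. split. eapply wsum_nonneg. apply inexact_lt_ok; auto. intros; apply ind_range.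
  eapply wsum_le1. apply inexact_lt_ok; auto. intros; apply ind_range. Qed.

Lemma split_facts (L R l' : list nat) : Permutation (L ++ R) l' -> NoDup l' ->
  NoDup L /\ NoDup R /\ (length L + length R = length l')%nat /\
  (forall x, In x l' <-> In x L \/ In x R).
Proof.
  intros HP Hnd. assert (Hn : NoDup (L ++ R)) by (eapply Permutation_NoDup; [apply Permutation_sym|]; eauto).
  split; [eapply NoDup_app_remove_r; eauto|]. split; [eapply NoDup_app_remove_l; eauto|].
  split. rewrite <- length_app. apply Permutation_length; auto.
  intros x. rewrite <- (perm_in_iff _ _ _ HP). apply in_app_iff.
Qed.

Lemma four_eight x y : (0 < y)%nat -> (y <= 2 * x)%nat -> 4 / INR x <= 8 / INR y.
Proof.
  intros H1 H2. assert (Hx : (0 < x)%nat) by lia.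
  apply lt_INR in H1, Hx. simpl in H1, Hx. apply le_INR in H2. rewrite mult_INR in H2. simpl in H2.
  apply Rmult_le_reg_r with (INR x * INR y). nra.
  replace (4 / INR x * (INR x * INR y)) with (4 * INR y) by (field; lra).
  replace (8 / INR y * (INR x * INR y)) with (8 * INR x) by (field; lra). lra.
Qed.

Lemma four_le x y : (0 < y)%nat -> (y <= x)%nat -> 4 / INR x <= 8 / INR y.
Proof. intros; apply four_eight; lia. Qed.

Lemma ub n C : forall f l a b, NoDup l -> (length l <= f)%nat -> In a l -> In b l ->
  (C a < C b)%nat -> (forall x, In x l -> (C x < 2^n)%nat) ->
  wsum (quicksort n e_aware C f l) (fun s => ind (before b a s)) <= INR f * (8 / INR (C b - C a)).
Proof.
  induction f as [|f IH]; intros l a b Hnd Hlen Ha Hb Hab Hv.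
  { destruct l; simpl in Hlen; [destruct Ha | lia]. }
  assert (Hl : l <> []) by (intro; subst; destruct Ha).
  assert (Hneab : a <> b) by (intro; subst; lia).
  rewrite qs_step by auto.
  set (D := 8 / INR (C b - C a)).
  assert (HD : 0 <= D).
  { unfold D. apply Rlt_le, Rdiv_lt_0_compat. lra. apply lt_0_INR. lia. }
  assert (HfD : 0 <= INR f * D) by (apply Rmult_le_pos; auto; apply pos_INR).
  destruct (uniform_ok l Hl) as [Gu Mu].
  apply Rle_trans with (wsum (uniform_pos l) (fun _ => D + INR f * D)).
  2: { rewrite wsum_const, Mu, S_INR. lra. }
  eapply wsum_le. exact Gu. intros i Hi. cbv beta in Hi.
  pose proof (remove_at_perm l i Hi) as HP.
  set (p := nth i l 0%nat) in *. set (l' := remove_at i l) in *.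
  assert (Hnd' : NoDup (p :: l')) by (eapply Permutation_NoDup; eauto).
  apply NoDup_cons_iff in Hnd'. destruct Hnd' as [Hpl' Hnd'].
  assert (Hin' : forall x, In x l -> x <> p -> In x l').
  { intros x Hx Hxp. rewrite (perm_in_iff _ _ _ HP) in Hx.
    destruct Hx; [congruence|auto]. }
  assert (Hsub : forall x, In x l' -> In x l).
  { intros x Hx. rewrite (perm_in_iff _ _ _ HP). right; auto. }
  assert (Hlen' : (length l' <= f)%nat).
  { apply Permutation_length in HP. simpl in HP. lia. }
  assert (Hpl : In p l) by (rewrite (perm_in_iff _ _ _ HP); left; auto).
  destruct (part_ok n e_aware C (C p) l' He_aw) as [Gp Mp].
  destruct (Nat.eq_dec p a) as [Epa|Npa]; [|destruct (Nat.eq_dec p b) as [Epb|Npb]].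
  -
    assert (Hbl' : In b l') by (apply Hin'; auto; congruence).
    apply Rle_trans with (wsum (partition_inexact n e_aware C (C p) l') (fun LR => ind (memb b (fst LR)))).
    + eapply wsum_le. exact Gp. intros [L R] HLR. simpl in HLR. simpl.
      destruct (split_facts L R l' HLR Hnd') as [_ [_ [_ Hmem]]].
      destruct (memb b L) eqn:E.
      * apply inner_range, He_aw.
      * rewrite Epa. rewrite inner_pa; auto. simpl; lra. apply He_aw.
        intro. apply Hpl'. rewrite Hmem. left. congruence.
        intro H. apply memb_In in H. congruence.
    + rewrite part_marg; auto. 2: apply He_aw.
      change (plt n e_aware C b (C p)) with (plt n e_aware (fun x => x) (C b) (C p)).
      eapply Rle_trans. apply aw_err_gt. rewrite Epa; auto. apply Hv; auto.
      rewrite Epa. fold D. unfold D. eapply Rle_trans. apply four_le with (y := (C b - C a)%nat); [clear -Hab; lia|lia]. unfold D in *; lra.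
  -
    assert (Hal' : In a l') by (apply Hin'; auto; congruence).
    apply Rle_trans with (wsum (partition_inexact n e_aware C (C p) l') (fun LR => ind (negb (memb a (fst LR))))).
    + eapply wsum_le. exact Gp. intros [L R] HLR. simpl in HLR. simpl.
      destruct (split_facts L R l' HLR Hnd') as [_ [_ [_ Hmem]]].
      destruct (memb a L) eqn:E.
      * rewrite inner_0; auto. simpl; lra. apply He_aw. apply memb_In; auto.
        intro. apply Hpl'. rewrite Hmem. left. congruence.
      * apply inner_range, He_aw.
    + rewrite (wsum_ext _ _ _ (fun LR => 1 - ind (memb a (fst LR))) Gp) by (intros; apply ind_negb).
      rewrite wsum_compl with (P := fun LR => Permutation (fst LR ++ snd LR) l') by (split; auto).
      rewrite part_marg; auto. 2: apply He_aw.
      change (plt n e_aware C a (C p)) with (plt n e_aware (fun x => x) (C a) (C p)).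
      eapply Rle_trans. apply aw_err_lt. rewrite Epb; auto. apply Hv; auto.
      rewrite Epb. fold D. unfold D. eapply Rle_trans. apply four_le with (y := (C b - C a)%nat); [clear -Hab; lia|lia]. unfold D in *; lra.
  -
    assert (Hal' : In a l') by (apply Hin'; auto).
    assert (Hbl' : In b l') by (apply Hin'; auto).
    apply Rle_trans with (wsum (partition_inexact n e_aware C (C p) l')
        (fun LR => ind (memb b (fst LR) && negb (memb a (fst LR))) + INR f * D)).
    + eapply wsum_le. exact Gp. intros [L R] HLR. simpl in HLR. simpl.
      destruct (split_facts L R l' HLR Hnd') as [HnL [HnR [Hlens Hmem]]].
      assert (HvL : forall x, In x L -> (C x < 2^n)%nat) by (intros; apply Hv, Hsub, Hmem; auto).
      assert (HvR : forall x, In x R -> (C x < 2^n)%nat) by (intros; apply Hv, Hsub, Hmem; auto).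
      destruct (memb b L) eqn:Eb, (memb a L) eqn:Ea; simpl.
      * apply memb_In in Eb, Ea. rewrite inner_L; auto. 2: apply He_aw.
        eapply Rle_trans. apply IH; auto. lia. unfold D; lra.
      * apply memb_In in Eb. pose proof (inner_range n e_aware C He_aw f L R p a b). lra.
      * apply memb_In in Ea. rewrite inner_0; auto. lra. apply He_aw.
        intro H. apply memb_In in H. congruence.
      * assert (HaL : ~ In a L) by (intro Hq; apply memb_In in Hq; congruence).
        assert (HbL : ~ In b L) by (intro Hq; apply memb_In in Hq; congruence).
        assert (In a R) by (destruct (proj1 (Hmem a) Hal'); tauto).
        assert (In b R) by (destruct (proj1 (Hmem b) Hbl'); tauto).
        rewrite inner_R; auto. 2: apply He_aw.
        eapply Rle_trans. apply IH; auto. lia. unfold D; lra.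
    + rewrite wsum_plus, wsum_const, Mp. rewrite part_joint; auto. 2: apply He_aw.
      rewrite Rmult_1_r. apply Rplus_le_compat_r.
      pose proof (plt_range n e_aware C He_aw b (C p)).
      pose proof (plt_range n e_aware C He_aw a (C p)).
      change (plt n e_aware C b (C p)) with (plt n e_aware (fun x => x) (C b) (C p)) in *.
      change (plt n e_aware C a (C p)) with (plt n e_aware (fun x => x) (C a) (C p)) in *.
      assert (Hvp : (C p < 2^n)%nat) by auto.
      assert (Hva : (C a < 2^n)%nat) by auto.
      assert (Hvb : (C b < 2^n)%nat) by auto.
      destruct (le_lt_dec (C b - C a) (2 * (C b - C p))) as [Hc|Hc].
      * assert (C p < C b)%nat by lia.
        pose proof (aw_err_gt n (C b) (C p) ltac:(lia) Hvb).
        pose proof (four_eight (C b - C p) (C b - C a) ltac:(lia) Hc). unfold D. nra.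
      * pose proof (aw_err_lt n (C a) (C p) ltac:(lia) Hvp).
        pose proof (four_eight (C p - C a) (C b - C a) ltac:(lia) ltac:(lia)). unfold D. nra.
Qed.

Fixpoint Pg (e : nat -> R) (k : nat) : R :=
  match k with O => 1 | S k' => Pg e k' * (1 - flip_prob e (S k')) end.

Lemma Pg_nonneg e k : (forall j, 0 <= e j) -> 0 <= Pg e k.
Proof. intros He; induction k; simpl. lra. pose proof (fp_range e (S k) (He _)). nra. Qed.

Lemma prodag_diag e x k : prodag e x x k = Pg e k.
Proof. induction k; simpl; auto. rewrite IHk, Bool.eqb_reflx. auto. Qed.

Lemma testbit_top v m : (2^m <= v < 2^(S m))%nat -> Nat.testbit v m = true.
Proof.
  intros [H1 H2]. assert (E : (v / 2^m = 1)%nat).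
  { assert (1 <= v / 2^m)%nat by (apply Nat.div_le_lower_bound; [apply Nat.pow_nonzero; lia| lia]).
    assert (v / 2^m < 2)%nat by (apply Nat.Div0.div_lt_upper_bound; simpl in H2; lia). lia. }
  pose proof (Nat.testbit_spec' v m) as T. rewrite E in T. simpl in T.
  destruct (Nat.testbit v m); simpl in T; congruence.
Qed.

Lemma prodag_top e v m : (2^m <= v < 2^(S m))%nat ->
  prodag e v (v mod 2^m) (S m) = Pg e m * flip_prob e (S m).
Proof.
  intros H. simpl. rewrite prodag_mod by lia. rewrite prodag_diag.
  rewrite testbit_top by auto. rewrite Nat.mod_pow2_bits_high by lia. simpl. auto.
Qed.

Lemma lb_triple m e (He : forall j, 0 <= e j) (C : nat -> nat) a b i :
  (C i < C a)%nat -> (C a < 2^(S m))%nat -> (C b mod 2^m < C i)%nat ->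
  (2^m <= C b < 2^(S m))%nat ->
  (Pg e m * flip_prob e (S m) * Pg e (S m)) * (Pg e (S m) * Pg e (S m)) <=
  plt (S m) e C b (C i) * (1 - plt (S m) e C a (C i)).
Proof.
  intros H1 H2 H3 H4.
  assert (Hbm : (C b mod 2^m < 2^(S m))%nat).
  { assert (C b mod 2^m < 2^m)%nat by (apply Nat.mod_upper_bound, Nat.pow_nonzero; lia). simpl; lia. }
  assert (A1 : Pg e m * flip_prob e (S m) * Pg e (S m) <= plt (S m) e C b (C i)).
  { rewrite <- (prodag_top e (C b) m H4). rewrite <- (prodag_diag e (C i) (S m)).
    eapply Rle_trans. apply lt_lb; auto; lia. unfold plt. right.
    f_equal. apply functional_extensionality. intros x.
    rewrite (proj2 (Nat.ltb_lt _ _) H3). destruct x; auto. }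
  assert (A2 : Pg e (S m) * Pg e (S m) <= 1 - plt (S m) e C a (C i)).
  { replace (Pg e (S m) * Pg e (S m)) with (prodag e (C a) (C a) (S m) * prodag e (C i) (C i) (S m)) by (rewrite !prodag_diag; ring).
    unfold plt. rewrite <- wsum_compl with (P := fun _ => True) by (apply inexact_lt_ok; auto).
    eapply Rle_trans. apply lt_lb; auto; lia. right.
    f_equal. apply functional_extensionality. intros x.
    rewrite (proj2 (Nat.ltb_ge _ _)) by lia. destruct x; simpl; ring. }
  pose proof (Pg_nonneg e m He). pose proof (Pg_nonneg e (S m) He).
  pose proof (fp_range e (S m) (He _)).
  apply Rmult_le_compat; auto. apply Rmult_le_pos; [apply Rmult_le_pos|]; lra.
  apply Rmult_le_pos; lra.
Qed.

Lemma lb_step n e (He : forall j, 0 <= e j) C f l a b : NoDup l -> In a l -> In b l -> a <> b ->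
  wsum (uniform_pos l) (fun i => if (Nat.eqb (nth i l 0%nat) a || Nat.eqb (nth i l 0%nat) b)%bool then 0
        else plt n e C b (C (nth i l 0%nat)) * (1 - plt n e C a (C (nth i l 0%nat))))
  <= wsum (quicksort n e C (S f) l) (fun s => ind (before b a s)).
Proof.
  intros Hnd Ha Hb Hab. assert (Hl : l <> []) by (intro; subst; destruct Ha).
  rewrite qs_step by auto. destruct (uniform_ok l Hl) as [Gu Mu].
  eapply wsum_le. exact Gu. intros i Hi. cbv beta in Hi.
  pose proof (remove_at_perm l i Hi) as HP.
  set (p := nth i l 0%nat) in *. set (l' := remove_at i l) in *.
  assert (Hnd' : NoDup (p :: l')) by (eapply Permutation_NoDup; eauto).
  apply NoDup_cons_iff in Hnd'. destruct Hnd' as [Hpl' Hnd'].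
  destruct (part_ok n e C (C p) l' He) as [Gp Mp].
  destruct (Nat.eqb_spec p a); destruct (Nat.eqb_spec p b); simpl.
  1-3: eapply wsum_nonneg; [exact Gp|]; intros; apply inner_range; auto.
  assert (Hin' : forall x, In x l -> x <> p -> In x l').
  { intros x Hx Hxp. rewrite (perm_in_iff _ _ _ HP) in Hx. destruct Hx; [congruence|auto]. }
  rewrite <- (part_joint n e C (C p) He l' b a); auto.
  eapply wsum_le. exact Gp. intros [L R] _. simpl.
  destruct (memb b L) eqn:Eb, (memb a L) eqn:Ea; simpl; try (apply inner_range; auto).
  rewrite inner_1; auto. lra. apply memb_In; auto. intro H; apply memb_In in H; congruence.
Qed.

Lemma sumR_app l1 l2 : sumR (l1 ++ l2) = sumR l1 + sumR l2.
Proof. induction l1; simpl. ring. rewrite IHl1; ring. Qed.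

Lemma sumR_plus {A} (l : list A) f g : sumR (map (fun x => f x + g x) l) = sumR (map f l) + sumR (map g l).
Proof. induction l; simpl. ring. rewrite IHl; ring. Qed.

Lemma sumR_scal {A} (l : list A) c f : sumR (map (fun x => c * f x) l) = c * sumR (map f l).
Proof. induction l; simpl. ring. rewrite IHl; ring. Qed.

Lemma sumR_le {A} (l : list A) f g : (forall x, In x l -> f x <= g x) -> sumR (map f l) <= sumR (map g l).
Proof. induction l; simpl; intros H. lra. apply Rplus_le_compat; auto. Qed.

Lemma sumR_ext {A} (l : list A) f g : (forall x, In x l -> f x = g x) -> sumR (map f l) = sumR (map g l).
Proof. induction l; simpl; intros H. lra. rewrite H, IHl; auto. Qed.

Lemma sumR_nonneg {A} (l : list A) f : (forall x, In x l -> 0 <= f x) -> 0 <= sumR (map f l).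
Proof. intros H. replace 0 with (sumR (map (fun _ : A => 0) l)). apply sumR_le; auto.
  clear H; induction l; simpl; auto. rewrite IHl; ring. Qed.



Lemma sumR_swap {A B} (L : list A) (l : list B) F :
  sumR (map (fun c => sumR (map (F c) l)) L) = sumR (map (fun x => sumR (map (fun c => F c x) L)) l).
Proof.
  induction L as [|c L IH]; simpl.
  - clear F. induction l; simpl; auto. rewrite <- IHl. ring.
  - rewrite IH. rewrite <- sumR_plus. auto.
Qed.

Lemma sumR_flat_map {A B} (L : list A) (h : A -> list B) F :
  sumR (map F (flat_map h L)) = sumR (map (fun c => sumR (map F (h c))) L).
Proof. induction L; simpl. auto. rewrite map_app, sumR_app, IHL. auto. Qed.

Fixpoint prodN (N : nat) (g : nat -> R) : R :=
  match N with O => 1 | S N' => g 0%nat * prodN N' (fun j => g (S j)) end.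

Lemma prodN_ext N : forall f g, (forall j, (j < N)%nat -> f j = g j) -> prodN N f = prodN N g.
Proof. induction N; intros f g H; simpl; auto. rewrite H by lia. f_equal. apply IHN. intros; apply H; lia. Qed.

Lemma prodN_mult N : forall f g, prodN N (fun j => f j * g j) = prodN N f * prodN N g.
Proof. induction N; intros f g; simpl. ring. rewrite (IHN (fun j => f (S j)) (fun j => g (S j))). ring. Qed.

Lemma prodN_const N c : prodN N (fun _ => c) = c ^ N.
Proof. induction N; simpl; auto. rewrite IHN; auto. Qed.

Lemma prodN_single N : forall a alpha, (a < N)%nat -> prodN N (fun j => if Nat.eqb j a then alpha else 1) = alpha.
Proof.
  induction N; intros a alpha H. lia. simpl. destruct a as [|a].
  - simpl. rewrite prodN_const, pow1. ring.
  - simpl. rewrite IHN by lia. ring.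
Qed.

Lemma AA_prod M : forall N (G : nat -> nat -> R),
  sumR (map (fun c => prodN N (fun j => G j (nth j c 0%nat))) (all_arrays N M)) =
  prodN N (fun j => sumR (map (G j) (seq 0 M))).
Proof.
  induction N as [|N IH]; intros G.
  - simpl. ring.
  - simpl all_arrays. rewrite sumR_flat_map.
    transitivity (sumR (map (fun c => sumR (map (G 0%nat) (seq 0 M)) *
        prodN N (fun j => G (S j) (nth j c 0%nat))) (all_arrays N M))).
    + apply sumR_ext. intros c _. rewrite map_map. simpl.
      generalize (prodN N (fun j : nat => G (S j) (nth j c 0%nat))). intros q.
      clear. induction (seq 0 M); simpl. ring. rewrite IHl. ring.
    + rewrite sumR_scal. rewrite (IH (fun j => G (S j))). simpl. auto.
Qed.

Lemma AA_bound N M : (0 < M)%nat -> forall c, In c (all_arrays N M) -> forall i, (nth i c 0%nat < M)%nat.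
Proof.
  intros HM. induction N; intros c Hc i; simpl in Hc.
  - destruct Hc as [<-|[]]. destruct i; simpl; lia.
  - apply in_flat_map in Hc. destruct Hc as [c' [Hc' Hv]]. apply in_map_iff in Hv.
    destruct Hv as [v [<- Hv]]. apply in_seq in Hv. destruct i; simpl; auto. lia.
Qed.

Lemma AA_count N M : sumR (map (fun _ => 1) (all_arrays N M)) = INR M ^ N.
Proof.
  transitivity (sumR (map (fun c => prodN N (fun j => (fun _ _ => 1) j (nth j c 0%nat))) (all_arrays N M))).
  - apply sumR_ext. intros. simpl. rewrite prodN_const, pow1. auto.
  - etransitivity. apply (AA_prod M N (fun _ _ => 1)). rewrite (prodN_ext N _ (fun _ => INR M)). apply prodN_const.
    intros. rewrite sumR_const, length_seq. ring.
Qed.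

Definition inb (lo hi x : nat) : bool := (Nat.leb lo x && Nat.ltb x hi)%bool.

Lemma count_inb lo hi : forall M, (lo <= hi)%nat ->
  sumR (map (fun x => ind (inb lo hi x)) (seq 0 M)) = INR (Nat.min hi M - Nat.min lo M).
Proof.
  induction M; intros H. simpl. rewrite !Nat.min_0_r. simpl. auto.
  rewrite seq_S, map_app, sumR_app, IHM by auto. simpl. unfold inb.
  destruct (Nat.leb_spec lo M); destruct (Nat.ltb_spec M hi); simpl;
  rewrite ?Rplus_0_r, ?Rplus_0_l;
  try (rewrite <- S_INR); f_equal; lia.
Qed.

Lemma ind_and3 a b c : ind (a && b && c) = ind a * ind b * ind c.
Proof. destruct a, b, c; simpl; ring. Qed.

Lemma triple_sum N M (A B P : nat -> bool) a b i : (a < N)%nat -> (b < N)%nat -> (i < N)%nat ->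
  a <> b -> a <> i -> b <> i ->
  sumR (map (fun x => ind (A x)) (seq 0 M)) = INR M / 8 ->
  sumR (map (fun x => ind (B x)) (seq 0 M)) = INR M / 8 ->
  sumR (map (fun x => ind (P x)) (seq 0 M)) = INR M / 8 ->
  sumR (map (fun c => ind (A (nth a c 0%nat) && B (nth b c 0%nat) && P (nth i c 0%nat))) (all_arrays N M))
  = INR M ^ N / 512.
Proof.
  intros Ha Hb Hi Hab Hai Hbi SA SB SP.
  set (G := fun j x => (if Nat.eqb j a then ind (A x) else 1) * (if Nat.eqb j b then ind (B x) else 1)
      * (if Nat.eqb j i then ind (P x) else 1)).
  transitivity (sumR (map (fun c => prodN N (fun j => G j (nth j c 0%nat))) (all_arrays N M))).
  - apply sumR_ext. intros c _. unfold G. rewrite !prodN_mult.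
    rewrite (prodN_ext N (fun j => if Nat.eqb j a then ind (A (nth j c 0%nat)) else 1)
      (fun j => if Nat.eqb j a then ind (A (nth a c 0%nat)) else 1)).
    rewrite (prodN_ext N (fun j => if Nat.eqb j b then ind (B (nth j c 0%nat)) else 1)
      (fun j => if Nat.eqb j b then ind (B (nth b c 0%nat)) else 1)).
    rewrite (prodN_ext N (fun j => if Nat.eqb j i then ind (P (nth j c 0%nat)) else 1)
      (fun j => if Nat.eqb j i then ind (P (nth i c 0%nat)) else 1)).
    rewrite !prodN_single by auto. apply ind_and3.
    all: intros j _; match goal with |- context [Nat.eqb j ?q] => destruct (Nat.eqb_spec j q) end; subst; auto.
  - rewrite AA_prod.
    rewrite (prodN_ext N _ (fun j => INR M * ((if Nat.eqb j a then /8 else 1) *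
        (if Nat.eqb j b then /8 else 1) * (if Nat.eqb j i then /8 else 1)))).
    + rewrite prodN_mult, prodN_const, !prodN_mult, !prodN_single by auto. field.
    + intros j _. unfold G.
      destruct (Nat.eqb_spec j a); [subst; rewrite (proj2 (Nat.eqb_neq a b)), (proj2 (Nat.eqb_neq a i)) by auto|];
      [rewrite (sumR_ext _ _ (fun x => ind (A x))) by (intros; ring); rewrite SA; field|].
      destruct (Nat.eqb_spec j b); [subst; rewrite (proj2 (Nat.eqb_neq b i)) by auto|];
      [rewrite (sumR_ext _ _ (fun x => ind (B x))) by (intros; ring); rewrite SB; field|].
      destruct (Nat.eqb_spec j i); [subst|];
      [rewrite (sumR_ext _ _ (fun x => ind (P x))) by (intros; ring); rewrite SP; field|].
      rewrite (sumR_ext _ _ (fun _ => 1)) by (intros; ring). rewrite sumR_const, length_seq. ring.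
Qed.

Lemma sum_eqb N a : sumR (map (fun i => ind (Nat.eqb i a)) (seq 0 N)) = if Nat.ltb a N then 1 else 0.
Proof.
  induction N. simpl. destruct a; auto.
  rewrite seq_S, map_app, sumR_app, IHN. simpl.
  destruct (Nat.ltb_spec a N); destruct (Nat.ltb_spec a (S N)); destruct (Nat.eqb_spec N a); simpl;
  try lia; ring.
Qed.

Lemma sum_ni N a b : (a < N)%nat -> (b < N)%nat -> a <> b ->
  sumR (map (fun i => ind (negb (Nat.eqb i a) && negb (Nat.eqb i b))) (seq 0 N)) = INR N - 2.
Proof.
  intros Ha Hb Hab.
  rewrite (sumR_ext _ _ (fun i => 1 + ((-1) * ind (Nat.eqb i a) + (-1) * ind (Nat.eqb i b)))).
  - rewrite !sumR_plus, !sumR_scal, !sum_eqb, sumR_const, length_seq.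
    rewrite (proj2 (Nat.ltb_lt a N)), (proj2 (Nat.ltb_lt b N)) by auto. ring.
  - intros i _. destruct (Nat.eqb_spec i a), (Nat.eqb_spec i b); subst; simpl; try congruence; ring.
Qed.

Lemma sum_seq N : sumR (map INR (seq 0 N)) = INR N * (INR N - 1) / 2.
Proof.
  induction N. simpl; field. rewrite seq_S, map_app, sumR_app, IHN. simpl sumR. rewrite S_INR. simpl plus. field.
Qed.

Definition rho e m := Pg e m * flip_prob e (S m) * Pg e (S m) * (Pg e (S m) * Pg e (S m)).

Definition ind3 (K : nat) (C : nat -> nat) a b i :=
  ind (inb (2*K) (3*K) (C a) && inb (4*K) (5*K) (C b) && inb K (2*K) (C i)).
Definition ni a b i := ind (negb (Nat.eqb i a) && negb (Nat.eqb i b)).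

Lemma pow_m m : (2 <= m)%nat -> (2^m = 4 * 2^(m-2))%nat /\ (2^(S m) = 8 * 2^(m-2))%nat.
Proof.
  intros H. replace m with (2 + (m-2))%nat at 1 3 by lia. rewrite Nat.pow_add_r. simpl. lia.
Qed.

Lemma rho_nonneg e m : (forall j, 0 <= e j) -> 0 <= rho e m.
Proof. intros He. unfold rho. pose proof (Pg_nonneg e m He). pose proof (Pg_nonneg e (S m) He).
  pose proof (fp_range e (S m) (He _)).
  apply Rmult_le_pos; [apply Rmult_le_pos; [apply Rmult_le_pos|]|apply Rmult_le_pos]; lra. Qed.

Lemma pair_lb e (He : forall j, 0 <= e j) m N (C : nat -> nat) a b :
  (2 <= m)%nat -> (a < b)%nat -> (b < N)%nat -> (forall i, (C i < 2^(S m))%nat) ->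
  INR (2^(m-2)) * / INR N * rho e m *
    sumR (map (fun i => ind3 (2^(m-2)) C a b i * ni a b i) (seq 0 N))
  <= Rabs (INR (C a) - INR (C b)) * dprob (quicksort (S m) e C N (seq 0 N)) (wrong_order C a b).
Proof.
  intros Hm Hab HbN Hv. set (K := (2^(m-2))%nat). destruct (pow_m m Hm) as [P1 P2]. fold K in P1, P2.
  assert (HK : (0 < K)%nat) by (apply pow2_pos).
  assert (Hrho := rho_nonneg e m He).
  assert (Hpos : 0 <= Rabs (INR (C a) - INR (C b)) * dprob (quicksort (S m) e C N (seq 0 N)) (wrong_order C a b)).
  { apply Rmult_le_pos. apply Rabs_pos. rewrite dprob_wsum. eapply wsum_nonneg.
    apply (qs_ok (S m) e C He). intros; apply ind_range. }
  destruct (inb (2*K) (3*K) (C a) && inb (4*K) (5*K) (C b))%bool eqn:E.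
  2: { rewrite (sumR_ext _ _ (fun _ => 0)). rewrite sumR_const. rewrite Rmult_0_l, Rmult_0_r. auto.
       intros i _. unfold ind3. rewrite E. simpl. ring. }
  apply Bool.andb_true_iff in E. destruct E as [EA EB].
  pose proof EA as E1. pose proof EB as E2. unfold inb in E1, E2.
  apply Bool.andb_true_iff in E1, E2. destruct E1 as [E1 E1']. destruct E2 as [E2 E2'].
  apply Nat.leb_le in E1, E2. apply Nat.ltb_lt in E1', E2'.
  assert (Hlt : (C a < C b)%nat) by lia.
  unfold wrong_order. rewrite (proj2 (Nat.ltb_lt _ _) Hlt).
  rewrite Rabs_minus_sym. rewrite <- minus_INR by lia. rewrite Rabs_right by (apply Rle_ge, pos_INR).
  destruct N as [|f]; [lia|].
  rewrite dprob_wsum.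
  eapply Rle_trans with (INR (C b - C a) * wsum (uniform_pos (seq 0 (S f)))
     (fun i => if (Nat.eqb (nth i (seq 0 (S f)) 0%nat) a || Nat.eqb (nth i (seq 0 (S f)) 0%nat) b)%bool then 0
        else plt (S m) e C b (C (nth i (seq 0 (S f)) 0%nat)) * (1 - plt (S m) e C a (C (nth i (seq 0 (S f)) 0%nat))))).
  2: { apply Rmult_le_compat_l. apply pos_INR. apply lb_step; auto. apply seq_NoDup.
       apply in_seq; lia. apply in_seq; lia. lia. }
  rewrite wsum_uniform, length_seq.
  assert (HKb : INR K <= INR (C b - C a)) by (apply le_INR; lia).
  assert (HS : rho e m * sumR (map (fun i => ind3 K C a b i * ni a b i) (seq 0 (S f))) <=
     sumR (map (fun i => if (Nat.eqb (nth i (seq 0 (S f)) 0%nat) a || Nat.eqb (nth i (seq 0 (S f)) 0%nat) b)%bool then 0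
        else plt (S m) e C b (C (nth i (seq 0 (S f)) 0%nat)) * (1 - plt (S m) e C a (C (nth i (seq 0 (S f)) 0%nat))))
        (seq 0 (S f)))).
  { rewrite <- sumR_scal. apply sumR_le. intros i Hi. apply in_seq in Hi.
    rewrite seq_nth by lia. simpl (0 + i)%nat. unfold ni, ind3.
    pose proof (plt_range (S m) e C He b (C i)). pose proof (plt_range (S m) e C He a (C i)).
    rewrite EA, EB. destruct (inb K (2*K) (C i)) eqn:Ei.
    2: { destruct (Nat.eqb_spec i a); destruct (Nat.eqb_spec i b); cbn [negb andb orb ind]; try lra; nra. }
    unfold inb in Ei. apply Bool.andb_true_iff in Ei. destruct Ei as [Ei Ei']. apply Nat.leb_le in Ei. apply Nat.ltb_lt in Ei'.
    destruct (Nat.eqb_spec i a); destruct (Nat.eqb_spec i b); cbn [negb andb orb ind]; try lra.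
    rewrite !Rmult_1_r. unfold rho. apply lb_triple; auto; try lia.
    - rewrite P1. replace (C b) with ((C b - 4*K) + 1 * (4*K))%nat at 1 by lia.
      rewrite Nat.Div0.mod_add. rewrite Nat.mod_small; lia. }
  assert (0 <= sumR (map (fun i => ind3 K C a b i * ni a b i) (seq 0 (S f)))).
  { apply sumR_nonneg. intros i _. unfold ind3, ni. pose proof (ind_range (inb (2 * K) (3 * K) (C a) && inb (4 * K) (5 * K) (C b) && inb K (2 * K) (C i))). 
    pose proof (ind_range (negb (i =? a)%nat && negb (i =? b)%nat)). nra. }
  assert (0 < INR (S f)) by (apply lt_0_INR; lia).
  assert (0 < / INR (S f)) by (apply Rinv_0_lt_compat; auto).
  replace (INR K * / INR (S f) * rho e m * sumR (map (fun i => ind3 K C a b i * ni a b i) (seq 0 (S f))))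
    with (INR K * (/ INR (S f) * (rho e m * sumR (map (fun i => ind3 K C a b i * ni a b i) (seq 0 (S f)))))) by ring.
  apply Rmult_le_compat; auto. apply pos_INR. apply Rmult_le_pos; [lra|]. apply Rmult_le_pos; auto.
  apply Rmult_le_compat_l; lra.
Qed.

Lemma E_lb e (He : forall j, 0 <= e j) m N : (2 <= m)%nat -> (3 <= N)%nat ->
  INR (2^(m-2)) * rho e m * (INR N - 1) * (INR N - 2) / 1024 <= expected_wkt (S m) N e.
Proof.
  intros Hm HN. set (K := (2^(m-2))%nat). destruct (pow_m m Hm) as [P1 P2]. fold K in P1, P2.
  set (M := (2^(S m))%nat) in *.
  assert (HMpos : 0 < INR M) by (apply lt_0_INR; unfold M; apply pow2_pos).
  assert (HMN : 0 < INR M ^ N) by (apply pow_lt; auto).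
  unfold expected_wkt. fold M.
  apply Rmult_le_reg_r with (INR M ^ N); auto. unfold Rdiv. rewrite (Rmult_assoc (sumR _)), Rinv_l, Rmult_1_r by lra.
  set (Z := INR K * / INR N * rho e m).
  eapply Rle_trans with (sumR (map (fun c => sumR (map (fun b => sumR (map (fun a =>
      Z * sumR (map (fun i => ind3 K (fun j => nth j c 0%nat) a b i * ni a b i) (seq 0 N)))
      (seq 0 b))) (seq 0 N))) (all_arrays N M))).
  2: { apply sumR_le. intros c Hc. unfold wkt. apply sumR_le. intros b Hb. apply in_seq in Hb.
       apply sumR_le. intros a Ha. apply in_seq in Ha. unfold Z. apply (pair_lb e He m N (fun j => nth j c 0%nat) a b); auto; try lia.
       intros i. apply AA_bound with N; auto. apply pow2_pos. }
  rewrite sumR_swap.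
  rewrite (sumR_ext _ _ (fun b => sumR (map (fun a => Z * (INR M ^ N / 512 * (INR N - 2))) (seq 0 b)))).
  - rewrite (sumR_ext _ _ (fun b => (Z * (INR M ^ N / 512 * (INR N - 2))) * INR b)).
    2: { intros b _. rewrite sumR_const, length_seq. auto. }
    rewrite sumR_scal. 
    replace (sumR (map INR (seq 0 N))) with (INR N * (INR N - 1) / 2) by (symmetry; apply sum_seq).
    unfold Z. assert (0 < INR N) by (apply lt_0_INR; lia). right. field. lra.
  - intros b Hb. apply in_seq in Hb. rewrite sumR_swap. apply sumR_ext. intros a Ha. apply in_seq in Ha.
    rewrite sumR_scal. f_equal. rewrite sumR_swap.
    rewrite (sumR_ext _ _ (fun i => ni a b i * (INR M ^ N / 512))).
    + rewrite (sumR_ext _ _ (fun i => (INR M ^ N / 512) * ni a b i)) by (intros; ring).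
      rewrite sumR_scal. unfold ni. rewrite sum_ni by lia. ring.
    + intros i Hi. apply in_seq in Hi.
      rewrite (sumR_ext _ _ (fun c => ni a b i * ind3 K (fun j => nth j c 0%nat) a b i)) by (intros; ring).
      rewrite sumR_scal. unfold ni.
      destruct (Nat.eqb_spec i a); destruct (Nat.eqb_spec i b); simpl; try ring.
      f_equal. unfold ind3. apply triple_sum; try lia.
      all: rewrite count_inb by lia; rewrite P2;
           rewrite !Nat.min_l by lia; rewrite minus_INR by lia; rewrite !mult_INR; simpl; field.
Qed.

Lemma pair_ub n N (C : nat -> nat) a b : (a < N)%nat -> (b < N)%nat -> (forall i, (C i < 2^n)%nat) ->
  Rabs (INR (C a) - INR (C b)) * dprob (quicksort n e_aware C N (seq 0 N)) (wrong_order C a b) <= 8 * INR N.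
Proof.
  intros Ha Hb Hv. unfold wrong_order. rewrite dprob_wsum.
  assert (HN : 0 <= INR N) by apply pos_INR.
  destruct (Nat.ltb_spec (C a) (C b)) as [H1|H1]; [|destruct (Nat.ltb_spec (C b) (C a)) as [H2|H2]].
  - rewrite Rabs_minus_sym. rewrite <- minus_INR by lia. rewrite Rabs_right by (apply Rle_ge, pos_INR).
    assert (0 < INR (C b - C a)) by (apply lt_0_INR; lia).
    eapply Rle_trans. apply Rmult_le_compat_l. lra.
    apply ub; auto. apply seq_NoDup. rewrite length_seq; lia. apply in_seq; lia. apply in_seq; lia.
    right. field. lra.
  - rewrite <- minus_INR by lia. rewrite Rabs_right by (apply Rle_ge, pos_INR).
    assert (0 < INR (C a - C b)) by (apply lt_0_INR; lia).
    eapply Rle_trans. apply Rmult_le_compat_l. lra.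
    apply ub; auto. apply seq_NoDup. rewrite length_seq; lia. apply in_seq; lia. apply in_seq; lia.
    right. field. lra.
  - rewrite (wsum_ext _ (fun _ => True) _ (fun _ => 0)). rewrite wsum_const. 
    rewrite Rmult_0_l, Rmult_0_r. lra.
    eapply good_weaken. apply (qs_ok n e_aware C He_aw). auto. intros; simpl; auto.
Qed.

Lemma E_ub n N : expected_wkt n N e_aware <= 8 * INR N ^ 3.
Proof.
  unfold expected_wkt. set (M := (2^n)%nat).
  assert (HMN : 0 < INR M ^ N) by (apply pow_lt, lt_0_INR; unfold M; apply Nat.neq_0_lt_0, Nat.pow_nonzero; lia).
  apply Rmult_le_reg_r with (INR M ^ N); auto. unfold Rdiv. rewrite (Rmult_assoc (sumR _)), Rinv_l, Rmult_1_r by lra.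
  rewrite <- (AA_count N M). rewrite <- sumR_scal. apply sumR_le. intros c Hc. rewrite Rmult_1_r.
  unfold wkt. eapply Rle_trans with (sumR (map (fun b => sumR (map (fun a => 8 * INR N) (seq 0 b))) (seq 0 N))).
  - apply sumR_le. intros b Hb. apply in_seq in Hb. apply sumR_le. intros a Ha. apply in_seq in Ha.
    apply (pair_ub n N (fun j => nth j c 0%nat)); try lia. intros i. apply AA_bound with N; auto.
    unfold M; apply Nat.neq_0_lt_0, Nat.pow_nonzero; lia.
  - eapply Rle_trans with (sumR (map (fun b => 8 * INR N * INR N) (seq 0 N))).
    + apply sumR_le. intros b Hb. apply in_seq in Hb. rewrite sumR_const, length_seq.
      apply Rmult_le_compat_l. assert (0 <= INR N) by apply pos_INR. lra. apply le_INR; lia.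
    + rewrite sumR_const, length_seq. simpl. lra.
Qed.

Lemma bernoulli q k : 0 <= q <= 1 -> 1 - INR k * q <= (1 - q) ^ k.
Proof.
  intros H. induction k. simpl. lra. rewrite S_INR. simpl.
  assert (0 <= (1 - q)^k) by (apply pow_le; lra).
  assert (H2 : (1 - q) * (1 - INR k * q) <= (1 - q) * (1 - q)^k) by (apply Rmult_le_compat_l; lra).
  assert (0 <= INR k) by apply pos_INR. assert (0 <= INR k * (q * q)) by (apply Rmult_le_pos; nra). nra.
Qed.

Lemma Pg_const e q k : (forall j, flip_prob e j = q) -> Pg e k = (1 - q) ^ k.
Proof. intros H; induction k; simpl; auto. rewrite IHk, H. ring. Qed.

Lemma big_pow k : 64 * (20 + INR k)^2 <= 2 ^ (21 + k).
Proof.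
  induction k.
  - simpl. lra.
  - rewrite S_INR. replace (21 + S k)%nat with (S (21 + k)) by lia. rewrite <- (tech_pow_Rmult 2 (21 + k)).
    assert (0 <= INR k) by apply pos_INR.
    assert ((20 + (INR k + 1))^2 <= 2 * (20 + INR k)^2) by (simpl; nra). lra.
Qed.

Lemma Rpow2_pos x : 0 < Rpower 2 x.
Proof. apply exp_pos. Qed.

Lemma q_small n : (20 <= n)%nat -> 8 * INR n * Rpower 2 (- ((INR n + 1) / 2)) <= 1.
Proof.
  intros Hn. set (X := Rpower 2 ((INR n + 1) / 2)).
  assert (HX : 0 < X) by apply Rpow2_pos.
  assert (HX2 : X * X = 2 ^ (S n)).
  { unfold X. rewrite <- Rpower_plus. rewrite <- Rpower_pow by lra. f_equal. rewrite S_INR. field. }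
  assert (H64 : 64 * INR n ^ 2 <= 2 ^ S n).
  { replace n with (20 + (n - 20))%nat at 1 by lia. replace (S n) with (21 + (n - 20))%nat by lia.
    rewrite plus_INR. replace (INR 20) with 20 by (simpl; lra). apply big_pow. }
  assert (8 * INR n <= X) by (assert (0 <= INR n) by apply pos_INR; nra).
  rewrite Rpower_Ropp. fold X. apply Rmult_le_reg_r with X; auto.
  rewrite Rmult_assoc, Rinv_l by lra. lra.
Qed.

Theorem theorem6 :
  exists c : R, c > 0 /\ exists M : nat, forall n N : nat,
    (M <= n)%nat -> (M <= N)%nat ->
    alpha_star n N >= c * Rpower 2 (INR n / 2) / (INR N * ln (INR N)).
Proof.
  exists (/ 3000000). split. lra. exists 20%nat. intros n N Hn HN.
  destruct n as [|m]; [lia|].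
  set (q := Rpower 2 (- ((INR (S m) + 1) / 2))).
  assert (Hq : forall j, flip_prob (e_obliv (S m)) j = q) by (intros; reflexivity).
  assert (Heo : forall j, 0 <= e_obliv (S m) j).
  { intros; unfold e_obliv. assert (0 <= INR (S m)) by apply pos_INR. lra. }
  assert (Hq01 : 0 < q <= 1) by (rewrite <- (Hq 0%nat); apply fp_range; auto).
  assert (Hqs : 8 * INR (S m) * q <= 1) by (apply q_small; lia).
  pose proof (E_lb (e_obliv (S m)) Heo m N ltac:(lia) ltac:(lia)) as Eo.
  unfold rho in Eo. rewrite !(Pg_const _ q) in Eo by auto. rewrite Hq in Eo.
  assert (HB : 1/2 <= (1 - q) ^ m * (1 - q) ^ S m * ((1 - q) ^ S m * (1 - q) ^ S m)).
  { rewrite <- !pow_add. eapply Rle_trans; [|apply bernoulli; lra].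
    rewrite !plus_INR, !S_INR. rewrite S_INR in Hqs. assert (0 <= INR m) by apply pos_INR. nra. }
  assert (HK : INR (2 ^ (m - 2)) = 2 ^ (S m) / 8).
  { destruct (pow_m m ltac:(lia)) as [_ P2]. rewrite <- (pow_INR 2). rewrite P2, mult_INR. simpl. field. }
  set (R2 := Rpower 2 (INR (S m) / 2)).
  assert (HR2 : 0 < R2) by apply Rpow2_pos.
  assert (H2q : R2 / 2 <= 2 ^ (S m) * q).
  { unfold q, R2. rewrite <- (Rpower_pow (S m) 2) by lra. rewrite <- Rpower_plus.
    replace (INR (S m) + - ((INR (S m) + 1) / 2)) with (INR (S m) / 2 + - (1/2)) by field.
    rewrite Rpower_plus, Rpower_Ropp.
    assert (Hr1 : Rpower 2 (1/2) <= Rpower 2 1) by (apply Rle_Rpower; lra). rewrite Rpower_1 in Hr1 by lra.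
    assert (0 < Rpower 2 (1/2)) by apply Rpow2_pos.
    pose proof (Rpow2_pos (INR (S m) / 2)). unfold Rdiv. apply Rmult_le_compat_l. lra. apply Rinv_le_contravar; lra. }
  assert (HN3 : 3 <= INR N) by (replace 3 with (INR 3) by (simpl; lra); apply le_INR; lia).
  assert (HEo : R2 * (INR N - 1) * (INR N - 2) / 32768 <= expected_wkt (S m) N (e_obliv (S m))).
  { eapply Rle_trans; [|exact Eo]. rewrite HK.
    set (P := (1 - q) ^ m * (1 - q) ^ S m * ((1 - q) ^ S m * (1 - q) ^ S m)) in *.
    replace (2 ^ S m / 8 * ((1 - q) ^ m * q * (1 - q) ^ S m * ((1 - q) ^ S m * (1 - q) ^ S m)))
      with ((2 ^ S m * q) * P / 8) by (unfold P; field).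
    assert (0 <= (INR N - 1) * (INR N - 2)) by nra.
    assert (R2 / 4 <= 2 ^ S m * q * P) by nra.
    unfold Rdiv. nra. }
  assert (HEa : 0 < expected_wkt (S m) N e_aware).
  { eapply Rlt_le_trans; [|apply (E_lb e_aware He_aw m N ltac:(lia) ltac:(lia))].
    assert (Hpg : forall k, 0 < Pg e_aware k).
    { induction k; simpl. lra. rewrite fp_aw. apply Rmult_lt_0_compat; auto.
      assert (1 < 2 ^ S k) by (apply Rlt_pow_R1; lia || lra). 
      assert (/ 2 ^ S k < 1) by (rewrite <- Rinv_1; apply Rinv_lt_contravar; lra). lra. }
    assert (0 < rho e_aware m).
    { unfold rho. rewrite fp_aw. pose proof (Hpg m). pose proof (Hpg (S m)).
      assert (0 < / 2 ^ S m) by (apply Rinv_0_lt_compat, pow_lt; lra).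
      apply Rmult_lt_0_compat; [apply Rmult_lt_0_compat; [apply Rmult_lt_0_compat|]|apply Rmult_lt_0_compat]; auto. }
    assert (0 < INR (2 ^ (m - 2))) by (apply lt_0_INR, pow2_pos).
    assert (0 < (INR N - 1) * (INR N - 2)) by nra.
    unfold Rdiv. apply Rmult_lt_0_compat; [|lra]. apply Rmult_lt_0_compat; [|lra]. apply Rmult_lt_0_compat; [|lra]. apply Rmult_lt_0_compat; auto. }
  pose proof (E_ub (S m) N) as HEa'.
  assert (HN0 : 0 < INR N) by lra.
  assert (Hln : 1 < ln (INR N)).
  { rewrite <- (ln_exp 1). apply ln_increasing. apply exp_pos. pose proof exp_le_3. assert (20 <= INR N) by (replace 20 with (INR 20) by (simpl; lra); apply le_INR; lia). lra. }
  unfold alpha_star. fold R2. apply Rle_ge.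
  apply Rle_trans with (expected_wkt (S m) N (e_obliv (S m)) / (8 * INR N ^ 3)).
  2: { assert (0 <= expected_wkt (S m) N (e_obliv (S m))).
       { eapply Rle_trans; [|exact HEo]. unfold Rdiv. apply Rmult_le_pos; [|lra].
         apply Rmult_le_pos; [apply Rmult_le_pos|]; lra. }
       unfold Rdiv. apply Rmult_le_compat_l. lra. apply Rinv_le_contravar; auto. }
  apply Rle_trans with (R2 * (INR N - 1) * (INR N - 2) / 32768 / (8 * INR N ^ 3)).
  2: { unfold Rdiv. apply Rmult_le_compat_r. apply Rlt_le, Rinv_0_lt_compat. simpl; nra.
       unfold Rdiv in HEo. auto. }
  assert (H9 : INR N * INR N <= 9 * ((INR N - 1) * (INR N - 2))) by nra.
  assert (0 < INR N * ln (INR N)) by nra.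
  apply Rle_trans with (R2 / (2359296 * INR N)).
  - replace (/3000000 * R2 / (INR N * ln (INR N))) with (R2 / (3000000 * (INR N * ln (INR N)))) by (field; lra).
    unfold Rdiv. apply Rmult_le_compat_l. lra. apply Rinv_le_contravar. nra. nra.
  - apply Rmult_le_reg_r with (2359296 * INR N * (8 * INR N ^ 3) * 32768). nra.
    unfold Rdiv. simpl pow.
    replace (R2 * / (2359296 * INR N) * (2359296 * INR N * (8 * (INR N * (INR N * (INR N * 1)))) * 32768))
      with (R2 * (8 * (INR N * (INR N * (INR N * 1)))) * 32768) by (field; lra).
    replace (R2 * (INR N - 1) * (INR N - 2) * / 32768 * / (8 * (INR N * (INR N * (INR N * 1)))) *
      (2359296 * INR N * (8 * (INR N * (INR N * (INR N * 1)))) * 32768))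
      with (R2 * ((INR N - 1) * (INR N - 2) * 2359296 * INR N)) by (field; lra).
    replace (R2 * (8 * (INR N * (INR N * (INR N * 1)))) * 32768) with
      (R2 * (8 * (INR N * (INR N * (INR N * 1))) * 32768)) by ring.
    apply Rmult_le_compat_l. lra. nra.
Qed.
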